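(* Let $X$ be a Hausdorff space and $\mathcal{H}$ a subspace with $\mathcal{F}_2(X)\subset\mathcal{H}\subset\mathcal{K}(X)$. Then $\mathcal{H}$ is extremally disconnected if and only if $X$ is discrete.
   Context: $\mathcal{K}(X)$ is the set of nonempty compact subsets of $X$ with the Vietoris topology (generated by $U^+=\{A: A\subset U\}$ and $U^-=\{A: A\cap U\neq\emptyset\}$ for $U$ open in $X$), and $\mathcal{F}_2(X)$ its subspace of nonempty subsets with at most $2$ points. A space is extremally disconnected if the closure of every open set is open. *)

(* Defs.v *)
From HB Require Import structures.
From mathcomp Require Import all_boot all_order.
From mathcomp Require Import all_classical all_reals all_analysis.
Set Implicit Arguments. Unset Strict Implicit. Unset Printing Implicit Defensive.
Local Open Scope classical_set_scope.

Section Vietoris.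
Variable X : topologicalType.

Definition Kspace : set (set X) := [set A | A !=set0 /\ compact A].

Definition F2space : set (set X) :=
  [set A | A !=set0 /\ exists x y : X, A `<=` [set x; y]].

Definition vplus (U : set X) : set (set X) := [set A | A `<=` U].
Definition vminus (U : set X) : set (set X) := [set A | A `&` U !=set0].

Definition vietoris_subbase (S : set (set X)) : Prop :=
  exists U : set X, open U /\ (S = vplus U \/ S = vminus U).

(** Open sets of the Vietoris topology on K(X): subsets of K(X) that are
    unions of (traces on K(X) of) finite intersections of subbasic sets. *)
Definition vietoris_open (W : set (set X)) : Prop :=
  W `<=` Kspace /\
  forall A, W A -> exists (n : nat) (S : nat -> set (set X)),
    (forall i, (i < n)%N -> vietoris_subbase (S i)) /\
    (forall i, (i < n)%N -> S i A) /\
    (forall B, Kspace B -> (forall i, (i < n)%N -> S i B) -> W B).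

Definition rel_open (H V : set (set X)) : Prop :=
  exists W, vietoris_open W /\ V = W `&` H.

Definition rel_closure (H V : set (set X)) : set (set X) :=
  [set A | H A /\ forall W, rel_open H W -> W A -> W `&` V !=set0].

Definition extremally_disconnected_sub (H : set (set X)) : Prop :=
  forall V, rel_open H V -> rel_open H (rel_closure H V).

Definition discrete_top : Prop := forall A : set X, open A.

End Vietoris.

Arguments Kspace X : clear implicits.
Arguments F2space X : clear implicits.
Arguments discrete_top X : clear implicits.

(* Main.v *)
Require Import Defs.
From HB Require Import structures.
From mathcomp Require Import all_boot all_order.
From mathcomp Require Import all_classical all_reals all_analysis.
Local Open Scope classical_set_scope.

Section Helpers.
Variable X : topologicalType.

Lemma nbhd_lemma (W : set (set X)) (p : X) : vietoris_open W -> W [set p] ->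
  exists G, open G /\ G p /\ forall B, Kspace X B -> B `<=` G -> W B.
Proof.
move=> [_ hW] /hW [n [S [Ssub [SA SB]]]].
suff : forall m, (m <= n)%N -> exists G, open G /\ G p /\
   forall B : set X, B !=set0 -> B `<=` G -> forall i, (i < m)%N -> S i B.
  move=> /(_ n (leqnn n)) [G [oG [Gp HG]]].
  exists G; split => //; split => // B KB BG; apply: SB => // i lin.
  by apply: HG => //; case: KB.
elim=> [|m IH] lmn.
  exists setT; split; first exact: openT.
  by split=> // B _ _ i; rewrite ltn0.
have [G [oG [Gp HG]]] := IH (ltnW lmn).
have [U [oU SU]] := Ssub m lmn.
have Up : U p.
  have := SA m lmn; case: SU => -> /=; first by apply.
  by move=> [x [/= -> Ux]].
exists (G `&` U); split; first exact: openI.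
split; first by split.
move=> B B0 BGU i; rewrite ltnS leq_eqVlt => /orP[/eqP ->| iltm].
  case: SU => -> /=; first by move=> x /BGU [].
  case: B0 => x Bx; exists x; split => //; exact: (BGU _ Bx).2.
by apply: HG => // x /BGU [].
Qed.

Lemma discrete_compact_finite (A : set X) : discrete_top X -> compact A ->
  finite_set A.
Proof.
move=> disc cA; apply: contrapT => infA.
pose F := filter_from (@finite_set X) (fun S => A `\` S).
have FF : Filter F.
  apply: filter_from_filter; first by exists set0; exact: finite_set0.
  move=> S1 S2 f1 f2; exists (S1 `|` S2); first by rewrite finite_setU.
  by move=> x [Ax nS]; split; split => // h; apply: nS; [left|right].
have PF : ProperFilter F.
  apply: filter_from_proper => S fS; apply/set0P/negP => /eqP h.
  apply: infA; apply: (sub_finite_set _ fS) => x Ax.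
  by apply: contrapT => nSx; have : (A `\` S) x by []; rewrite h.
have FA : F A by exists set0; [exact: finite_set0 | move=> x []].
have [x [Ax clx]] := cA F PF FA.
have FAx : F (A `\` [set x]) by exists [set x]; [exact: finite_set1|].
have nx : nbhs x [set x] by apply: open_nbhs_nbhs; split; [exact: disc|].
by have [y [[_ nyx] yx]] := clx _ _ FAx nx; apply: nyx.
Qed.

Lemma singleton_open (A : set X) : discrete_top X -> Kspace X A ->
  vietoris_open [set A].
Proof.
move=> disc [nA cA]; split; first by move=> B ->.
move=> _ ->.
have /finite_seqP [s sE] := discrete_compact_finite _ disc cA.
case: nA => x0 _.
exists (size s).+1, (fun i => if i == 0%N then vplus A else vminus [set nth x0 s i.-1]).
split; first by move=> i _; exists (if i == 0%N then A else [set nth x0 s i.-1]); split;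
  [exact: disc | case: (i == 0%N); [left|right]].
split.
  case=> [|i] /=; first by move=> _.
  rewrite ltnS => lis; exists (nth x0 s i); split => //.
  by rewrite sE /=; exact: mem_nth.
move=> B KB SB.
apply/seteqP; split; first exact: (SB 0%N isT).
move=> a Aa.
have aS : a \in s by move: Aa; rewrite sE.
have ji : (index a s < size s)%N by rewrite index_mem.
have := SB (index a s).+1 ji; rewrite /= nth_index //.
by move=> [z [Bz za]]; rewrite -za.
Qed.
End Helpers.

Theorem proposition3p3 (X : topologicalType) (H : set (set X)) :
  hausdorff_space X ->
  F2space X `<=` H -> H `<=` Kspace X ->
  (extremally_disconnected_sub H <-> discrete_top X).
Proof.
move=> hX F2H HK.
have F2pair : forall x y : X, H [set x; y].
  move=> x y; apply: F2H; split; first by exists x; left.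
  by exists x, y.
have F2one : forall x : X, H [set x].
  move=> x; apply: F2H; split; first by exists x.
  by exists x, x => z ->; left.
split; last first.
  move=> disc V [W [vW eV]].
  have VH : V `<=` H by rewrite eV => A [].
  suff -> : rel_closure H V = V by exists W.
  apply/seteqP; split.
    move=> A [HA clA].
    have sO := singleton_open _ _ disc (HK _ HA).
    have [B [[/= -> _] VB]] := clA ([set A] `&` H) (ex_intro _ [set A] (conj sO erefl)) (conj erefl HA).
    exact: VB.
  move=> A VA; split; first exact: VH.
  by move=> W' _ W'A; exists A.
move=> ED.
have [//|ndisc] := pselect (discrete_top X).
exfalso.
have [p np] : exists p : X, ~ open [set p].
  apply: contrapT => hne; apply: ndisc => A.
  have -> : A = \bigcup_(x in A) [set x].
    by apply/seteqP; split => [x Ax|x [y Ay ->]] //; exists x.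
  apply: bigcup_open => x _.
  by apply: contrapT => nx; apply: hne; exists x.
have other : forall W, open W -> W p -> exists x, W x /\ x <> p.
  move=> W oW Wp; apply: contrapT => hne; apply: np.
  suff <- : W = [set p] by [].
  apply/seteqP; split => [x Wx|x ->] //.
  by apply: contrapT => xp; apply: hne; exists x.
have hsep := hX; rewrite open_hausdorff in hsep.
pose P : set (set (set X)) := fun F =>
  (forall Q, F Q -> open Q /\ exists N, open N /\ N p /\ N `&` Q = set0) /\
  (forall Q1 Q2, F Q1 -> F Q2 -> Q1 `&` Q2 !=set0 -> Q1 = Q2).
have [Fm [PFm maxFm]] : exists A, P A /\ forall B, A `<` B -> ~ P B.
  apply: Zorn_bigcup => F FP tot; split.
    by move=> Q [G FG GO]; exact: ((FP _ FG).1 _ GO).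
  move=> Q1 Q2 [G1 FG1 G1O] [G2 FG2 G2O].
  have [s12|s21] := tot _ _ FG1 FG2.
    exact: ((FP _ FG2).2 _ _ (s12 _ G1O) G2O).
  exact: ((FP _ FG1).2 _ _ G1O (s21 _ G2O)).
have one_member : forall W, open W -> W p -> exists Q, Fm Q /\ W `&` Q !=set0.
  move=> W oW Wp.
  have [x [Wx xp]] := other W oW Wp.
  have xpb : x != p by apply/eqP.
  have [[Gx Gp] /= [xG pG] [oGx oGp /eqP GxGp]] := hsep x p xpb.
  move: xG pG; rewrite !in_setE => xG pG.
  apply: contrapT => hne.
  have nmeet : forall Q, Fm Q -> ~ ((W `&` Gx) `&` Q !=set0).
    move=> Q FO [z [[Wz Gz] Oz]]; apply: hne; exists Q; split => //.
    by exists z.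
  apply: (maxFm (Fm `|` [set W `&` Gx])).
    split; first by move=> Q FO; left.
    move=> sub; have FW := sub (W `&` Gx) (or_intror erefl).
    apply: (nmeet _ FW); exists x; split; split => //.
  split.
    move=> Q [FO|->]; first exact: (PFm.1 _ FO).
    split; first exact: openI.
    exists Gp; split => //; split => //.
    apply/seteqP; split => [z [Gpz [_ Gxz]]|z] //.
    by have : (Gx `&` Gp) z by []; rewrite GxGp.
  move=> Q1 Q2 [HF1|->] [HF2|->] m.
  - exact: (PFm.2 _ _ HF1 HF2 m).
  - by exfalso; apply: (nmeet _ HF1); rewrite setIC.
  - by exfalso; apply: (nmeet _ HF2).
  - by [].
have two_members : forall W, open W -> W p -> exists Q1 Q2,
    Fm Q1 /\ Fm Q2 /\ Q1 <> Q2 /\ W `&` Q1 !=set0 /\ W `&` Q2 !=set0.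
  move=> W oW Wp.
  have [Q1 [HF1 [x [Wx Q1x]]]] := one_member W oW Wp.
  have [_ [N1 [oN1 [N1p N1O1]]]] := PFm.1 _ HF1.
  have [Q2 [HF2 [y [[Wy N1y] O2y]]]] := one_member (W `&` N1) (openI oW oN1) (conj Wp N1p).
  exists Q1, Q2; split => //; split => //; split.
    move=> e; subst Q2.
    by have : (N1 `&` Q1) y by []; rewrite N1O1.
  by split; [exists x|exists y].
pose V := [set A | H A /\ exists Q, Fm Q /\ A `<=` Q].
pose V' := [set A | H A /\ exists Q1 Q2, Fm Q1 /\ Fm Q2 /\ Q1 <> Q2 /\
   A `&` Q1 !=set0 /\ A `&` Q2 !=set0].
have oV : rel_open H V.
  exists [set A | Kspace X A /\ exists Q, Fm Q /\ A `<=` Q]; split.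
    split; first by move=> A [].
    move=> A [KA [Q [FO AO]]].
    exists 1%N, (fun _ => vplus Q); split.
      by move=> i _; exists Q; split; [exact: (PFm.1 _ FO).1|left].
    split; first by move=> i _.
    move=> B KB /(_ 0%N isT) BO; split => //; by exists Q.
  apply/seteqP; split => [A [HA e]|A [[KA e] HA]]; last by split.
  by split => //; split => //; exact: HK.
have oV' : rel_open H V'.
  exists [set A | Kspace X A /\ exists Q1 Q2, Fm Q1 /\ Fm Q2 /\ Q1 <> Q2 /\
   A `&` Q1 !=set0 /\ A `&` Q2 !=set0]; split.
    split; first by move=> A [].
    move=> A [KA [Q1 [Q2 [HF1 [HF2 [ne [m1 m2]]]]]]].
    exists 2%N, (fun i => if i == 0%N then vminus Q1 else vminus Q2); split.
      move=> i _; exists (if i == 0%N then Q1 else Q2).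
      by case: (i == 0%N); split; [exact: (PFm.1 _ HF1).1|right|exact: (PFm.1 _ HF2).1|right].
    split; first by case=> [|[|]].
    move=> B KB SB; split => //; exists Q1, Q2; split => //; split => //; split => //.
    by split; [exact: (SB 0%N isT)|exact: (SB 1%N isT)].
  apply/seteqP; split => [A [HA e]|A [[KA e] HA]]; last by split.
  by split => //; split => //; exact: HK.
have disj : forall A, V A -> V' A -> False.
  move=> A [_ [Q [FO AO]]] [_ [Q1 [Q2 [HF1 [HF2 [ne [[a1 [Aa1 O1a1]] [a2 [Aa2 O2a2]]]]]]]]].
  have e1 : Q = Q1 by apply: (PFm.2 _ _ FO HF1); exists a1; split => //; exact: AO.
  have e2 : Q = Q2 by apply: (PFm.2 _ _ FO HF2); exists a2; split => //; exact: AO.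
  by apply: ne; rewrite -e1 -e2.
have [W0 [vW0 eW0]] := ED V oV.
have clp : rel_closure H V [set p].
  split; first exact: F2one.
  move=> W' [W'' [vW'' ->]] [W''p _].
  have [G [oG [Gp HG]]] := nbhd_lemma _ _ _ vW'' W''p.
  have [Q [FO [x [Gx Ox]]]] := one_member G oG Gp.
  exists [set x]; split; last by split; [exact: F2one|exists Q; split => // z ->].
  split; last exact: F2one.
  by apply: HG; [exact: HK; exact: F2one|move=> z ->].
move: (clp); rewrite eW0 => -[W0p _].
have [G [oG [Gp HG]]] := nbhd_lemma _ _ _ vW0 W0p.
have [Q1 [Q2 [HF1 [HF2 [ne [[x [Gx Q1x]] [y [Gy O2y]]]]]]]] := two_members G oG Gp.
have clB : rel_closure H V [set x; y].
  rewrite eW0; split; last exact: F2pair.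
  by apply: HG; [exact: HK; exact: F2pair|move=> z [->|->]].
have V'B : V' [set x; y].
  split; first exact: F2pair.
  exists Q1, Q2; split => //; split => //; split => //.
  by split; [exists x; split => //; left|exists y; split => //; right].
have [A [V'A VA]] := clB.2 V' oV' V'B.
exact: (disj A VA V'A).
Qed.
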